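(* Let $G=(V,E)$ be a (finite or infinite) graph without isolated edge, and let $L=\{L_v:v\in V\}\cup\{L_e:e\in E\}$ be a set of lists of weights for $G$. For a subgraph $H$ of $G$, let $L_H$ denote the restriction of $L$ to $V(H)\cup E(H)$, i.e. $L_H=\{L_v:v\in V(H)\}\cup\{L_e:e\in E(H)\}$. If every finite induced subgraph $H$ of $G$ that is not isomorphic to $K_2$ has an $L_H$-weighting, then $G$ has an $L$-weighting.
   Context: Graphs are simple and may be infinite; an isolated edge is a connected component isomorphic to $K_2$. Each list is a finite subset of $\{1,\dots,k\}$ for some natural number $k$. For a graph $F$ and a set of lists $M=\{M_v:v\in V(F)\}\cup\{M_e:e\in E(F)\}$, a weighting of $F$ from $M$ is a function $\omega\colon V(F)\cup E(F)\to\mathbb{Z}_{>0}$ with $\omega(v)\in M_v$ and $\omega(e)\in M_e$ for all vertices $v$ and edges $e$ of $F$. The weighted degree of a vertex $v$ in $F$ is $s_\omega(v)=\sum_{w\in N_F(v)}\omega(vw)+\omega(v)$; if $v$ has infinite degree $\kappa$ in $F$ this sum is the cardinal $\kappa$. An $M$-weighting of $F$ is a weighting $\omega$ of $F$ from $M$ such that for every edge $uv$ of $F$, either $s_\omega(u)\neq s_\omega(v)$, or $u$ and $v$ have the same infinite degree in $F$. *)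

(* Defs.v *)
(* Graphs are given by a vertex type V (possibly infinite)
   and an adjacency relation adj (assumed symmetric and irreflexive).
   Edge-indexed data (lists, weights) are functions V -> V -> _ that are
   required to be symmetric on edges. *)
From Stdlib Require Import List Arith.
Import ListNotations.

Definition list_in_range (k : nat) (l : list nat) : Prop :=
  forall x, In x l -> 1 <= x <= k.

Definition is_weighting {V : Type} (adj : V -> V -> Prop)
  (LV : V -> list nat) (LE : V -> V -> list nat)
  (wV : V -> nat) (wE : V -> V -> nat) : Prop :=
  (forall v, In (wV v) (LV v)) /\
  (forall u v, adj u v -> In (wE u v) (LE u v)) /\
  (forall u v, adj u v -> wE u v = wE v u).

Definition fin_deg {V : Type} (adj : V -> V -> Prop) (v : V) : Prop :=
  exists l : list V, NoDup l /\ forall w, In w l <-> adj v w.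

Definition has_wdeg {V : Type} (adj : V -> V -> Prop)
  (wV : V -> nat) (wE : V -> V -> nat) (v : V) (n : nat) : Prop :=
  exists l : list V, NoDup l /\ (forall w, In w l <-> adj v w) /\
    n = wV v + list_sum (map (wE v) l).

Definition same_card_nbhd {V : Type} (adj : V -> V -> Prop) (u v : V) : Prop :=
  exists (f : {w | adj u w} -> {w | adj v w}) (g : {w | adj v w} -> {w | adj u w}),
    (forall x, g (f x) = x) /\ (forall y, f (g y) = y).

(* s_omega(u) <> s_omega(v), where an infinite degree kappa gives s = kappa *)
Definition wdeg_differ {V : Type} (adj : V -> V -> Prop)
  (wV : V -> nat) (wE : V -> V -> nat) (u v : V) : Prop :=
  (fin_deg adj u /\ fin_deg adj v /\
     forall n m, has_wdeg adj wV wE u n -> has_wdeg adj wV wE v m -> n <> m)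
  \/ (fin_deg adj u /\ ~ fin_deg adj v)
  \/ (~ fin_deg adj u /\ fin_deg adj v)
  \/ (~ fin_deg adj u /\ ~ fin_deg adj v /\ ~ same_card_nbhd adj u v).

Definition same_inf_deg {V : Type} (adj : V -> V -> Prop) (u v : V) : Prop :=
  ~ fin_deg adj u /\ ~ fin_deg adj v /\ same_card_nbhd adj u v.

Definition is_M_weighting {V : Type} (adj : V -> V -> Prop)
  (LV : V -> list nat) (LE : V -> V -> list nat)
  (wV : V -> nat) (wE : V -> V -> nat) : Prop :=
  is_weighting adj LV LE wV wE /\
  forall u v, adj u v -> wdeg_differ adj wV wE u v \/ same_inf_deg adj u v.

Definition has_M_weighting {V : Type} (adj : V -> V -> Prop)
  (LV : V -> list nat) (LE : V -> V -> list nat) : Prop :=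
  exists wV wE, is_M_weighting adj LV LE wV wE.

Definition no_isolated_edge {V : Type} (adj : V -> V -> Prop) : Prop :=
  ~ exists u v, adj u v /\ (forall w, adj u w -> w = v) /\ (forall w, adj v w -> w = u).

Definition ind_vert {V : Type} (S : list V) : Type := {x : V | In x S}.

Definition ind_adj {V : Type} (adj : V -> V -> Prop) (S : list V)
  (x y : ind_vert S) : Prop := adj (proj1_sig x) (proj1_sig y).

Definition ind_LV {V : Type} (LV : V -> list nat) (S : list V)
  (x : ind_vert S) : list nat := LV (proj1_sig x).

Definition ind_LE {V : Type} (LE : V -> V -> list nat) (S : list V)
  (x y : ind_vert S) : list nat := LE (proj1_sig x) (proj1_sig y).

Definition induced_is_K2 {V : Type} (adj : V -> V -> Prop) (S : list V) : Prop :=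
  exists a b, adj a b /\ forall x, In x S <-> (x = a \/ x = b).

(* Main.v *)
Require Import Defs.
From Stdlib Require Import List Arith Classical ClassicalEpsilon ProofIrrelevance.
From mathcomp Require boolp classical_sets.
Lemma zorn_pre (T:Type) (t0:T) (R: T->T->Prop):
  (forall t, R t t) -> (forall r s t, R r s -> R s t -> R r t) ->
  (forall A : T -> Prop, (forall s t, A s -> A t -> R s t \/ R t s) -> exists t, forall s, A s -> R s t) ->
  exists t, forall s, R t s -> R s t.
Proof.
intros Hr Ht Hc.
destruct (@classical_sets.ZL_preorder T t0 (fun a b => boolp.asbool (R a b))) as [t Ht'].
- intro t; apply boolp.asboolT; auto.
- intros r s u H1 H2; apply boolp.asboolT. apply boolp.asboolW in H1. apply boolp.asboolW in H2. eauto.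
- intros A HA. destruct (Hc A) as [t Hta].
  + intros s u H1 H2. destruct (HA s u H1 H2) as [h|h]; [left|right]; apply boolp.asboolW; exact h.
  + exists t. intros s Hs; apply boolp.asboolT; auto.
- exists t. intros s Hs. unfold classical_sets.premaximal in Ht'. 
  assert (h := Ht' s). apply boolp.asboolW. apply h. apply boolp.asboolT. exact Hs.
Qed.
Import ListNotations.

Section Compact.
Variables (X Cn : Type) (D : X -> list nat) (sat : Cn -> (X -> nat) -> Prop) (supp : Cn -> list X).
Hypothesis supp_ok : forall c a b, (forall x, In x (supp c) -> a x = b x) -> sat c a -> sat c b.
Definition good W cs (a : X -> nat) := (forall x, In x W -> In (a x) (D x)) /\ (forall c, In c cs -> sat c a).
Hypothesis finsat : forall W cs, exists a, good W cs a.

Definition agrees (p : X -> option nat) (W : list X) (a : X -> nat) := forall x n, In x W -> p x = Some n -> a x = n.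
Definition consistent p := forall W cs, exists a, good W cs a /\ agrees p W a.
Definition ext (p q : X -> option nat) := forall x n, p x = Some n -> q x = Some n.
Definition CT := {p | consistent p}.
Definition CR (s t : CT) := ext (proj1_sig s) (proj1_sig t).

Lemma chain_ub (A : CT -> Prop) : (forall s t, A s -> A t -> CR s t \/ CR t s) -> exists t, forall s, A s -> CR s t.
Proof.
intros Hch.
set (u := fun x => match excluded_middle_informative (exists n s, A s /\ proj1_sig s x = Some n) with
  | left H => Some (proj1_sig (constructive_indefinite_description _ H)) | right _ => None end).
assert (Hu1 : forall x n, u x = Some n -> exists s, A s /\ proj1_sig s x = Some n).
{ intros x n. unfold u. destruct excluded_middle_informative as [H|H]; [|discriminate].
  destruct constructive_indefinite_description as [m Hm]. simpl. intro E; injection E; intros; subst; auto. }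
assert (Hu2 : forall s x n, A s -> proj1_sig s x = Some n -> u x = Some n).
{ intros s x n As Hs. unfold u. destruct excluded_middle_informative as [H|H].
  - destruct constructive_indefinite_description as [m [s' [As' Hs']]]. simpl.
    destruct (Hch s s' As As') as [h|h]; unfold CR, ext in h.
    + apply h in Hs. rewrite Hs in Hs'. congruence.
    + apply h in Hs'. rewrite Hs in Hs'. injection Hs'; intros; subst; auto.
  - exfalso; apply H; eauto. }
assert (Hcov : forall W, (forall x, In x W -> u x = None) \/
   (exists s, A s /\ forall x n, In x W -> u x = Some n -> proj1_sig s x = Some n)).
{ induction W as [|x W IH].
  - left; intros x [].
  - destruct (u x) as [n|] eqn:Ex.
    + destruct (Hu1 _ _ Ex) as [s0 [As0 Hs0]]. right.
      destruct IH as [IH|[s [As Hs]]].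
      * exists s0; split; auto. intros y m [<-|Hy] Ey.
        -- rewrite Ex in Ey; injection Ey; intros; subst; auto.
        -- rewrite IH in Ey; auto; discriminate.
      * destruct (Hch s s0 As As0) as [h|h]; unfold CR, ext in h.
        -- exists s0; split; auto. intros y m [<-|Hy] Ey.
           ++ rewrite Ex in Ey; injection Ey; intros; subst; auto.
           ++ auto.
        -- exists s; split; auto. intros y m [<-|Hy] Ey.
           ++ rewrite Ex in Ey; injection Ey; intros; subst; auto.
           ++ auto.
    + destruct IH as [IH|[s [As Hs]]].
      * left; intros y [<-|Hy]; auto.
      * right; exists s; split; auto. intros y m [<-|Hy] Ey.
        -- rewrite Ex in Ey; discriminate.
        -- auto. }
assert (Hcons : consistent u).
{ intros W cs. destruct (Hcov W) as [H|[s [As Hs]]].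
  - destruct (finsat W cs) as [a Ha]. exists a; split; auto.
    intros x n Hx E. rewrite H in E; auto; discriminate.
  - destruct (proj2_sig s W cs) as [a [Ha1 Ha2]]. exists a; split; auto.
    intros x n Hx E. apply Ha2; auto. }
exists (exist _ u Hcons). intros s As. unfold CR, ext; simpl. intros x n E. eapply Hu2; eauto.
Qed.

Lemma comb (p : X -> option nat) (Bad : nat -> list X -> list Cn -> Prop) :
  forall l, (forall c, In c l -> exists W cs, Bad c W cs) ->
  exists W cs, forall c, In c l -> exists W' cs', incl W' W /\ incl cs' cs /\ Bad c W' cs'.
Proof.
induction l as [|c l IH]; intros H.
- exists [], []; intros c [].
- destruct (H c (or_introl eq_refl)) as [W1 [cs1 B1]].
  destruct IH as [W2 [cs2 B2]]. { intros; apply H; right; auto. }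
  exists (W1 ++ W2), (cs1 ++ cs2). intros c' [<-|Hc'].
  + exists W1, cs1; repeat split; auto; intros z Hz; apply in_or_app; auto.
  + destruct (B2 c' Hc') as [W' [cs' [h1 [h2 h3]]]]. exists W', cs'; repeat split; auto.
    * intros z Hz; apply in_or_app; auto.
    * intros z Hz; apply in_or_app; auto.
Qed.

Theorem compactness : exists a, (forall x, In (a x) (D x)) /\ forall c, sat c a.
Proof.
assert (c0 : consistent (fun _ => None)).
{ intros W cs; destruct (finsat W cs) as [a Ha]; exists a; split; auto. intros x n _ E; discriminate. }
destruct (@zorn_pre CT (exist _ _ c0) CR) as [[p Hp] Hmax].
- intros t x n; auto.
- intros r s t h1 h2 x n E; auto.
- exact chain_ub.
- assert (Htot : forall x, exists n, p x = Some n).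
  { intros x. destruct (p x) as [n|] eqn:Ex; [eauto|exfalso].
    set (upd := fun c y => if excluded_middle_informative (y = x) then Some c else p y).
    assert (Hext : forall c, ext p (upd c)).
    { intros c y n E. unfold upd. destruct excluded_middle_informative; auto. subst; congruence. }
    assert (Hnc : forall c, ~ consistent (upd c)).
    { intros c Hc. specialize (Hmax (exist _ _ Hc) (Hext c)). unfold CR, ext in Hmax; simpl in Hmax.
      assert (upd c x = Some c) by (unfold upd; destruct excluded_middle_informative; congruence).
      apply Hmax in H. congruence. }
    destruct (@comb p (fun c W cs => forall a, ~ (good W cs a /\ agrees (upd c) W a)) (D x)) as [W [cs HB]].
    { intros c _. specialize (Hnc c). apply not_all_ex_not in Hnc as [W HW].
      apply not_all_ex_not in HW as [cs Hcs]. exists W, cs. intros a Ha; apply Hcs; eauto. }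
    destruct (Hp (x :: W) cs) as [a [[Ga1 Ga2] Ag]].
    assert (Hax : In (a x) (D x)) by (apply Ga1; left; auto).
    destruct (HB _ Hax) as [W' [cs' [i1 [i2 Hb]]]].
    apply (Hb a). split; [split|].
    + intros y Hy; apply Ga1; right; auto.
    + intros c Hc; apply Ga2; auto.
    + intros y m Hy E. unfold upd in E. destruct excluded_middle_informative.
      * subst; congruence.
      * apply Ag; auto. right; auto. }
  exists (fun x => match p x with Some n => n | None => 0 end). split.
  + intros x. destruct (Htot x) as [n En]. destruct (Hp [x] []) as [a [[G1 _] Ag]].
    rewrite En. rewrite <- (Ag x n); auto; [apply G1|]; left; auto.
  + intros c. destruct (Hp (supp c) [c]) as [a [[_ G2] Ag]].
    apply (supp_ok c a). 2: apply G2; left; auto.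
    intros x Hx. destruct (Htot x) as [n En]. rewrite En. auto.
Qed.
End Compact.

Section Graph.
Variables (V : Type) (adj : V -> V -> Prop) (LV : V -> list nat) (LE : V -> V -> list nat).

Definition GX := (V + (V * V))%type.
Definition GC := (V * V * list V * list V)%type.
Definition GD (x : GX) : list nat := match x with inl v => LV v | inr (u, v) => 0 :: LE u v end.
Definition Gsat (c : GC) (a : GX -> nat) : Prop :=
  match c with (u, v, lu, lv) =>
  (adj u v -> In (a (inr (u, v))) (LE u v) /\ a (inr (u, v)) = a (inr (v, u))) /\
  (adj u v -> NoDup lu -> (forall w, In w lu <-> adj u w) -> NoDup lv -> (forall w, In w lv <-> adj v w) ->
    a (inl u) + list_sum (map (fun w => a (inr (u, w))) lu) <> a (inl v) + list_sum (map (fun w => a (inr (v, w))) lv))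
  end.
Definition Gsupp (c : GC) : list GX :=
  match c with (u, v, lu, lv) =>
  inl u :: inl v :: inr (u, v) :: inr (v, u) :: map (fun w => inr (u, w)) lu ++ map (fun w => inr (v, w)) lv
  end.

Lemma Gsupp_ok : forall c a b, (forall x, In x (Gsupp c) -> a x = b x) -> Gsat c a -> Gsat c b.
Proof.
intros [[[u v] lu] lv] a b H [H1 H2]; simpl in H.
assert (E1 : forall w, In w lu -> a (inr (u, w)) = b (inr (u, w))).
{ intros w Hw. apply H. do 4 right. apply in_or_app; left. apply in_map_iff; eauto. }
assert (E2 : forall w, In w lv -> a (inr (v, w)) = b (inr (v, w))).
{ intros w Hw. apply H. do 4 right. apply in_or_app; right. apply in_map_iff; eauto. }
split.
- intros h. rewrite <- (H (inr (u,v))), <- (H (inr (v,u))); auto; simpl; tauto.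
- intros h n1 h1 n2 h2. rewrite <- (H (inl u)), <- (H (inl v)) by (simpl; tauto).
  rewrite <- (map_ext_in _ _ lu E1), <- (map_ext_in _ _ lv E2). auto.
Qed.
End Graph.



Lemma avoid_K2 (V : Type) (adj : V -> V -> Prop) :
  (forall v, ~ adj v v) -> no_isolated_edge adj ->
  forall S0 : list V, exists S, incl S0 S /\ ~ induced_is_K2 adj S.
Proof.
intros Hirr Hni S0. destruct (classic (induced_is_K2 adj S0)) as [[a [b [Hab HS]]]|H].
2: { exists S0; split; [intros z; auto | auto]. }
assert (Hw : exists w e, adj e w /\ (e = a \/ e = b) /\ w <> a /\ w <> b).
{ apply NNPP; intro Hn. apply Hni. exists a, b. split; auto. split.
  - intros w h. apply NNPP; intro hw. apply Hn. exists w, a. repeat split; auto.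
    intro; subst; apply (Hirr a); auto.
  - intros w h. apply NNPP; intro hw. apply Hn. exists w, b. repeat split; auto.
    intro; subst; apply (Hirr b); auto. }
destruct Hw as [w [e [Hew [He [Hwa Hwb]]]]].
exists (w :: S0). split. { intros z Hz; right; auto. }
intros [a' [b' [Hab' HS']]].
assert (Ha : a = a' \/ a = b') by (apply HS'; right; apply HS; auto).
assert (Hb : b = a' \/ b = b') by (apply HS'; right; apply HS; auto).
assert (Hw' : w = a' \/ w = b') by (apply HS'; left; auto).
assert (a <> b) by (intro; subst; apply (Hirr b); auto).
destruct Ha, Hb, Hw'; subst; congruence.
Qed.

Lemma NoDup_map_in {A B} (f : A -> B) l : (forall x y, In x l -> In y l -> f x = f y -> x = y) -> NoDup l -> NoDup (map f l).
Proof.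
induction l as [|x l IH]; intros H N; simpl; constructor.
- inversion N; subst. intro Hin; apply in_map_iff in Hin as [y [Hy Hyl]].
  assert (y = x) by (apply H; simpl; auto). subst; contradiction.
- inversion N; subst. apply IH; auto. intros; apply H; simpl; auto.
Qed.

Definition vX {V} (x : GX V) : list V := match x with inl v => [v] | inr (u, v) => [u; v] end.
Definition vC {V} (c : GC V) : list V := match c with (u, v, lu, lv) => u :: v :: lu ++ lv end.

Lemma Gfinsat (V : Type) (adj : V -> V -> Prop) (LV : V -> list nat) (LE : V -> V -> list nat) :
  (forall u v, adj u v -> adj v u) ->
  (forall v, ~ adj v v) ->
  no_isolated_edge adj ->
  (forall S : list V, ~ induced_is_K2 adj S ->
     has_M_weighting (ind_adj adj S) (ind_LV LV S) (ind_LE LE S)) ->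
  forall W cs, exists a, good (GX V) (GC V) (GD V LV LE) (Gsat V adj LE) W cs a.
Proof.
intros Hsym Hirr Hni Hfin W cs.
set (S0 := flat_map vX W ++ flat_map vC cs).
destruct (avoid_K2 V adj Hirr Hni S0) as [S [HS HK]].
assert (HW : forall x, In x W -> incl (vX x) S).
{ intros x Hx z Hz. apply HS. apply in_or_app; left; apply in_flat_map; eauto. }
assert (HC : forall c, In c cs -> incl (vC c) S).
{ intros c Hc z Hz. apply HS. apply in_or_app; right; apply in_flat_map; eauto. }
destruct S as [|s0 S'].
{ exists (fun _ => 0). split.
  - intros [v|[u v]] Hx; exfalso; apply (HW _ Hx v); simpl; auto.
  - intros [[[u v] lu] lv] Hc; exfalso; apply (HC _ Hc u); simpl; auto. }
remember (s0 :: S') as S eqn:HeqS.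
assert (Hs0 : In s0 S) by (subst; left; auto).
pose (d := exist (fun y => In y S) s0 Hs0 : ind_vert S).
destruct (Hfin S HK) as [wV' [wE' [[Hw1 [Hw2 Hw3]] HM]]].
pose (toS := fun x : V => match excluded_middle_informative (In x S) with
   | left H => exist (fun y => In y S) x H | right _ => d end).
assert (toS_val : forall x, In x S -> proj1_sig (toS x) = x).
{ intros x Hx. unfold toS. destruct excluded_middle_informative; [reflexivity|contradiction]. }
assert (toS_eq : forall y : ind_vert S, toS (proj1_sig y) = y).
{ intros [y Hy]. unfold toS. simpl. destruct excluded_middle_informative; [|contradiction].
  f_equal; apply proof_irrelevance. }
assert (Hadj : forall u v, In u S -> In v S -> adj u v -> ind_adj adj S (toS u) (toS v)).
{ intros u v Hu Hv h. unfold ind_adj. rewrite !toS_val; auto. }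
pose (a := fun x : GX V => match x with inl v => wV' (toS v)
   | inr (u, v) => if excluded_middle_informative (adj u v) then wE' (toS u) (toS v) else 0 end).
assert (a_edge : forall u v, adj u v -> a (inr (u, v)) = wE' (toS u) (toS v)).
{ intros u v h. simpl. destruct excluded_middle_informative; [auto|contradiction]. }
assert (Hsum : forall u lu, (forall w, In w lu -> adj u w) ->
   list_sum (map (fun w => a (inr (u, w))) lu) = list_sum (map (wE' (toS u)) (map toS lu))).
{ intros u lu h. rewrite map_map. f_equal. apply map_ext_in. intros w Hw. apply a_edge; auto. }
assert (Hnb : forall u lu, In u S -> incl lu S -> NoDup lu -> (forall w, In w lu <-> adj u w) ->
   has_wdeg (ind_adj adj S) wV' wE' (toS u) (wV' (toS u) + list_sum (map (wE' (toS u)) (map toS lu)))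
   /\ fin_deg (ind_adj adj S) (toS u)).
{ intros u lu Hu Hi N F.
  assert (N' : NoDup (map toS lu)).
  { apply NoDup_map_in; auto. intros x y Hx Hy E.
    rewrite <- (toS_val x), <- (toS_val y), E; auto. }
  assert (F' : forall y, In y (map toS lu) <-> ind_adj adj S (toS u) y).
  { intros y; split.
    - intros Hy. apply in_map_iff in Hy as [w [<- Hw]]. apply Hadj; auto. apply F; auto.
    - intros Hy. unfold ind_adj in Hy. rewrite toS_val in Hy by auto.
      rewrite <- (toS_eq y). apply in_map. apply F; auto. }
  split.
  - exists (map toS lu). auto.
  - exists (map toS lu). auto. }
exists a. split.
- intros [v|[u v]] Hx.
  + assert (Hv : In v S) by (apply (HW _ Hx); simpl; auto).
    simpl. specialize (Hw1 (toS v)). unfold ind_LV in Hw1. rewrite toS_val in Hw1; auto.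
  + assert (Hu : In u S) by (apply (HW _ Hx); simpl; auto).
    assert (Hv : In v S) by (apply (HW _ Hx); simpl; auto).
    simpl. destruct excluded_middle_informative as [h|h]; [right|left; auto].
    specialize (Hw2 _ _ (Hadj u v Hu Hv h)). unfold ind_LE in Hw2. rewrite !toS_val in Hw2; auto.
- intros [[[u v] lu] lv] Hc.
  assert (Hu : In u S) by (apply (HC _ Hc); simpl; auto).
  assert (Hv : In v S) by (apply (HC _ Hc); simpl; auto).
  assert (Hlu : incl lu S) by (intros z Hz; apply (HC _ Hc); simpl; right; right; apply in_or_app; auto).
  assert (Hlv : incl lv S) by (intros z Hz; apply (HC _ Hc); simpl; right; right; apply in_or_app; auto).
  split.
  + intros h. rewrite (a_edge u v h), (a_edge v u (Hsym _ _ h)). split.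
    * specialize (Hw2 _ _ (Hadj u v Hu Hv h)). unfold ind_LE in Hw2. rewrite !toS_val in Hw2; auto.
    * apply Hw3. apply Hadj; auto.
  + intros h N1 F1 N2 F2.
    rewrite (Hsum u lu) by (intros; apply F1; auto).
    rewrite (Hsum v lv) by (intros; apply F2; auto).
    change (a (inl u)) with (wV' (toS u)). change (a (inl v)) with (wV' (toS v)).
    destruct (Hnb u lu Hu Hlu N1 F1) as [Hu1 Hu2].
    destruct (Hnb v lv Hv Hlv N2 F2) as [Hv1 Hv2].
    destruct (HM _ _ (Hadj u v Hu Hv h)) as
      [[[_ [_ Hd]] | [[_ Hn] | [[Hn _] | [Hn _]]]] | [Hn _]]; try contradiction.
    apply Hd; auto.
Qed.

Theorem theorem5 (V : Type) (adj : V -> V -> Prop) (k : nat)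
  (LV : V -> list nat) (LE : V -> V -> list nat) :
  (forall u v, adj u v -> adj v u) ->
  (forall v, ~ adj v v) ->
  no_isolated_edge adj ->
  (forall v, list_in_range k (LV v)) ->
  (forall u v, adj u v -> list_in_range k (LE u v)) ->
  (forall u v, adj u v -> LE u v = LE v u) ->
  (forall S : list V, ~ induced_is_K2 adj S ->
     has_M_weighting (ind_adj adj S) (ind_LV LV S) (ind_LE LE S)) ->
  has_M_weighting adj LV LE.
Proof.
intros Hsym Hirr Hni _ _ _ Hfin.
destruct (compactness (GX V) (GC V) (GD V LV LE) (Gsat V adj LE) (@Gsupp V) (Gsupp_ok V adj LV LE)
   (Gfinsat V adj LV LE Hsym Hirr Hni Hfin)) as [a [HD Hs]].
exists (fun v => a (inl v)), (fun u v => a (inr (u, v))).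
split; [split; [|split]|].
- intros v. exact (HD (inl v)).
- intros u v h. exact (proj1 (proj1 (Hs (u, v, [], [])) h)).
- intros u v h. exact (proj2 (proj1 (Hs (u, v, [], [])) h)).
- intros u v h.
  destruct (classic (fin_deg adj u)) as [fu|fu]; destruct (classic (fin_deg adj v)) as [fv|fv].
  + left. left. split; [auto|split; [auto|]].
    intros n m [l1 [N1 [F1 E1]]] [l2 [N2 [F2 E2]]]. subst n m.
    exact (proj2 (Hs (u, v, l1, l2)) h N1 F1 N2 F2).
  + left; right; left; auto.
  + left; right; right; left; auto.
  + destruct (classic (same_card_nbhd adj u v)) as [sc|sc].
    * right; repeat split; auto.
    * left; right; right; right; auto.
Qed.
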